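(* Let $V$ and $W$ be graded vector spaces, let $d_V$ be a degree-one derivation of $TV$ and $d_W$ a degree-one derivation of $TW$, and let $V\#W$ be a graded vector space with a linear isomorphism $V\otimes W\to V\#W$, $v\otimes w\mapsto v\#w$, with $|v\#w|=|v|+|w|-1$. Extend $\#$ by the formulas $$(v_1\cdots v_k)\#'w=\sum_{i=1}^k(-1)^{a_i}v_1\cdots v_{i-1}(v_i\#w)v_{i+1}\cdots v_k,\quad a_i=|v_1|+\dots+|v_{i-1}|+|w|(|v_{i+1}|+\dots+|v_k|),$$ $$v\#(w_1\cdots w_l)=\sum_{j=1}^l(-1)^{b_j}w_1\cdots w_{j-1}(v\#w_j)w_{j+1}\cdots w_l,\quad b_j=(|v|+1)(|w_1|+\dots+|w_{j-1}|),$$ for $v,v_i\in V$, $w,w_j\in W$ (extended linearly, and equal to $0$ on scalars). Let $D_0$ be the derivation of degree $1$ of $T(V\oplus W\oplus V\#W)$ defined by $D_0v=d_Vv$, $D_0w=d_Ww$ and $$D_0(v\#w)=v\cdot w-(-1)^{|v||w|}w\cdot v-(D_0v)\#'w-(-1)^{|v|}v\#(D_0w).$$ Then for all $v\in V$, $w\in W$, $a\in TV$, $b\in TW$: 1. $D_0(a\#'w)=a\cdot w-(-1)^{|a||w|}w\cdot a-(D_0a)\#'w-(-1)^{|a|}a\#'D_0w$; 2. $D_0(v\#b)=v\,b-(-1)^{|v||b|}b\,v-(D_0v)\#b-(-1)^{|v|}v\#D_0b$.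
   Context: $TU$ denotes the tensor algebra on a graded vector space $U$; a derivation $D$ of degree $1$ satisfies $D(xy)=D(x)y+(-1)^{|x|}xD(y)$. In the expressions $a\#'D_0w$ with $a\in TV$ and $D_0w\in TW$, and similarly elsewhere, $\#'$ and $\#$ are extended bilinearly by the displayed formulas (for a word $a$ and a word $b$, $a\#'b$ expands first in the second argument via the second formula); the paper states the identity for $a\in TV$ with $w\in W$ and for $v\in V$ with $b\in TW$.
   Formalization: For words a, b, a#'b is the first displayed formula with w replaced by b, each vᵢ#b expanded by the second, not expanded first in b; a#b is the second with v replaced by a. The paper assumes this as well. *)

(* Defs.v *)
(* the tensor algebra T(U) on a graded vector space U with a
   homogeneous basis indexed by a choiceType is the free associative algebra
   {malg K[{fmonom U}]} of the multinomials library. *)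
From HB Require Import structures.
From mathcomp Require Import all_boot all_order all_algebra.
From mathcomp Require Import finmap.
From mathcomp.multinomials Require Import monalg.

Set Implicit Arguments.
Unset Strict Implicit.
Unset Printing Implicit Defensive.

Import GRing.Theory Num.Theory.
Local Open Scope ring_scope.

Section Sharp.
Variables (K : fieldType) (I J : choiceType) (degV : I -> int) (degW : J -> int).

(* Basis letters of V ⊕ W ⊕ V#W : inl (inl i) = e_i ∈ V, inl (inr j) = f_j ∈ W,
   inr (i, j) = e_i # f_j ∈ V#W. *)
Definition letter := ((I + J) + (I * J))%type.

Definition tens := {malg K[{fmonom letter}]}.

Definition ldeg (u : letter) : int :=
  match u with
  | inl (inl i) => degV i
  | inl (inr j) => degW j
  | inr (i, j) => degV i + degW j - 1
  end.

Definition wdeg (s : seq letter) : int := \sum_(u <- s) ldeg u.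

Definition sgn (n : int) : K := (-1) ^ n.

Definition isVl (u : letter) : bool := if u is inl (inl _) then true else false.
Definition isWl (u : letter) : bool := if u is inl (inr _) then true else false.

Definition wrd (s : seq letter) : tens := << FMonom s >>.

Definition homog (n : int) (x : tens) : Prop :=
  forall m : {fmonom letter}, wdeg m != n -> x@_m = 0.

Definition inTV (x : tens) : Prop :=
  forall m : {fmonom letter}, ~~ all isVl m -> x@_m = 0.
Definition inTW (x : tens) : Prop :=
  forall m : {fmonom letter}, ~~ all isWl m -> x@_m = 0.

Definition inV (x : tens) : Prop :=
  forall m : {fmonom letter}, (size m != 1%N) || ~~ all isVl m -> x@_m = 0.
Definition inW (x : tens) : Prop :=
  forall m : {fmonom letter}, (size m != 1%N) || ~~ all isWl m -> x@_m = 0.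

(* Extension of # to words.  For a word a = v_1...v_k of V-letters and a word
   b = w_1...w_l of W-letters:

   a #' b  is the first displayed formula with w replaced by b (sign
          a_i = |v_1|+...+|v_{i-1}| + |b|(|v_{i+1}|+...+|v_k|)), the inner
          v_i # b being expanded by the second displayed formula;
   a #  b  is the second displayed formula with v replaced by a (sign
          b_j = (|a|+1)(|w_1|+...+|w_{j-1}|)), the inner a #' w_j being
          expanded by the first displayed formula.

   When k = 1 or l = 1 both are exactly the displayed formulas, and both
   vanish when a or b is the empty word (scalars). *)
Definition sharpwL (a b : seq letter) : tens :=
  \sum_(i < size a) \sum_(j < size b)
    match onth a i, onth b j with
    | Some (inl (inl iv)), Some (inl (inr jw)) =>
        sgn (wdeg (take i a) + wdeg b * wdeg (drop i.+1 a)
             + (degV iv + 1) * wdeg (take j b))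
        *: wrd (take i a ++ take j b ++ inr (iv, jw) :: drop j.+1 b ++ drop i.+1 a)
    | _, _ => 0
    end.

Definition sharpwR (a b : seq letter) : tens :=
  \sum_(j < size b) \sum_(i < size a)
    match onth a i, onth b j with
    | Some (inl (inl iv)), Some (inl (inr jw)) =>
        sgn ((wdeg a + 1) * wdeg (take j b)
             + (wdeg (take i a) + degW jw * wdeg (drop i.+1 a)))
        *: wrd (take j b ++ take i a ++ inr (iv, jw) :: drop i.+1 a ++ drop j.+1 b)
    | _, _ => 0
    end.

Definition sharpL (x y : tens) : tens :=
  \sum_(m1 <- msupp x) \sum_(m2 <- msupp y) (x@_m1 * y@_m2) *: sharpwL m1 m2.
Definition sharpR (x y : tens) : tens :=
  \sum_(m1 <- msupp x) \sum_(m2 <- msupp y) (x@_m1 * y@_m2) *: sharpwR m1 m2.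

Definition is_deriv1 (D : tens -> tens) : Prop :=
  [/\ forall (c : K) (x y : tens), D (c *: x + y) = c *: D x + D y,
      forall (n : int) (x y : tens), homog n x -> D (x * y) = D x * y + sgn n *: (x * D y)
    & forall (n : int) (x : tens), homog n x -> homog (n + 1) (D x)].

Definition is_deriv1_on (P : tens -> Prop) (d : tens -> tens) : Prop :=
  [/\ forall x, P x -> P (d x),
      forall (c : K) (x y : tens), P x -> P y -> d (c *: x + y) = c *: d x + d y,
      forall (n : int) (x y : tens), P x -> P y -> homog n x ->
        d (x * y) = d x * y + sgn n *: (x * d y)
    & forall (n : int) (x : tens), P x -> homog n x -> homog (n + 1) (d x)].

End Sharp.

(* Main.v *)
Require Import Defs.
From HB Require Import structures.
From mathcomp Require Import all_boot all_order all_algebra.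
From mathcomp Require Import finmap.
From mathcomp.multinomials Require Import monalg.
From mathcomp Require Import ring.
Import GRing.Theory.
Local Open Scope ring_scope.

Set Implicit Arguments.
Unset Strict Implicit.
Unset Printing Implicit Defensive.

Section Sqz.
Variables (R : comNzRingType) (V : lmodType R).
Definition sqz := (R * V)%type.
HB.instance Definition _ := GRing.Zmodule.on sqz.
Definition sqmul (a b : sqz) : sqz := (a.1 * b.1, a.1 *: b.2 + b.1 *: a.2).
Definition sqone : sqz := (1, 0).
Lemma sqmulA : associative sqmul.
Proof. move=> [a A] [b B] [c C]; rewrite /sqmul /=; congr pair; first by rewrite mulrA.
by rewrite !scalerDr !scalerA [c * a]mulrC [c * b]mulrC addrA. Qed.
Lemma sqmulC : commutative sqmul.
Proof. by move=> [a A] [b B]; rewrite /sqmul /= mulrC addrC. Qed.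
Lemma sqmul1 : left_id sqone sqmul.
Proof. by move=> [a A]; rewrite /sqmul /= mul1r scale1r scaler0 addr0. Qed.
Lemma sqmulD : left_distributive sqmul +%R.
Proof. by move=> [a A] [b B] [c C]; rewrite /sqmul /= mulrDl scalerDl scalerDr; congr pair; rewrite -!addrA; congr (_ + _); rewrite addrCA. Qed.
Lemma sqone_neq0 : sqone != 0.
Proof. by rewrite /sqone; apply/eqP => -[] /eqP; rewrite oner_eq0. Qed.
HB.instance Definition _ := GRing.Zmodule_isComNzRing.Build sqz sqmulA sqmulC sqmul1 sqmulD sqone_neq0.
Definition emb (A : V) : sqz := (0, A).
Definition cst (c : R) : sqz := (c, 0).
Lemma emb_inj A B : emb A = emb B -> A = B. Proof. by case. Qed.
Lemma embD A B : emb (A + B) = emb A + emb B. Proof. by rewrite /emb; congr pair; rewrite addr0. Qed.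
Lemma embN A : emb (- A) = - emb A. Proof. by rewrite /emb; congr pair; rewrite oppr0. Qed.
Lemma emb0 : emb 0 = 0. Proof. by []. Qed.
Lemma embZ c A : emb (c *: A) = cst c * emb A.
Proof. by rewrite /emb /cst [_ * _]/(sqmul _ _) /= mulr0 scaler0 addr0. Qed.
Lemma cstM a b : cst (a * b) = cst a * cst b.
Proof. by rewrite /cst [cst a * _]/(sqmul _ _) /= !scaler0 addr0. Qed.
Lemma cstD a b : cst (a + b) = cst a + cst b. Proof. by rewrite /cst; congr pair; rewrite addr0. Qed.
Lemma cstN a : cst (- a) = - cst a. Proof. by rewrite /cst; congr pair; rewrite oppr0. Qed.
Lemma cst1 : cst 1 = 1. Proof. by []. Qed.
Lemma cst0 : cst 0 = 0. Proof. by []. Qed.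
End Sqz.




Lemma scalerAl2 (R : pzRingType) (A : lalgType R) (k : R) (x y : A) : (k *: x) * y = k *: (x * y).
Proof. by rewrite scalerAl. Qed.

Section SgnLemmas.
Variable (K : fieldType).
Local Notation sgn := (sgn K).
Lemma sgnD m n : sgn (m + n) = sgn m * sgn n.
Proof. by rewrite /sgn expfzDr // oppr_eq0 oner_eq0. Qed.
Lemma sgnN1 : sgn (-1) = -1.
Proof. by rewrite /sgn -exprz_inv invrN1. Qed.
Lemma sgn1 : sgn 1 = -1. Proof. by []. Qed.
Lemma sgn0 : sgn 0 = 1. Proof. by []. Qed.
Lemma sgn_pm1 n : sgn n = 1 \/ sgn n = -1.
Proof.
have H k : (-1 : K) ^+ k = 1 \/ (-1 : K) ^+ k = -1.
  by rewrite -signr_odd; case: (odd k); [right; rewrite expr1|left; rewrite expr0].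
case: n => k; rewrite /sgn.
  by have := H k.
rewrite NegzE -exprz_inv invrN1; by have := H k.+1.
Qed.
End SgnLemmas.

Ltac mnorm Ar := rewrite ?(mulrDl, mulrDr, mulrBl, mulrBr, mulNr, mulrN, mul0r, mulr0, mulr1, mul1r, scalerAl2, Ar, mulrA, scaler0, scale0r).
Ltac snorm := rewrite ?(sgnD, sgnN1, sgn1, sgn0).
Ltac modring := apply: emb_inj; rewrite ?(embD, embN, embZ, emb0, cstM, cstD, cstN, cst1, cst0); ring.

Section Words.
Variables (K : fieldType) (I J : choiceType) (degV : I -> int) (degW : J -> int).
Variables (A : lalgType K) (wr : seq (letter I J) -> A).
Hypothesis wr_cat : forall s t, wr (s ++ t) = wr s * wr t.
Hypothesis wr_nil : wr [::] = 1.
Hypothesis Ar : forall (c : K) (x y : A), x * (c *: y) = c *: (x * y).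
Local Notation wdeg := (wdeg degV degW).
Local Notation ldeg := (ldeg degV degW).
Local Notation sgn := (sgn K).

Lemma wdeg_cat s t : wdeg (s ++ t) = wdeg s + wdeg t.
Proof. by rewrite /Defs.wdeg big_cat. Qed.
Lemma wdeg_nil : wdeg [::] = 0. Proof. by rewrite /Defs.wdeg big_nil. Qed.
Lemma wdeg_cons l s : wdeg (l :: s) = ldeg l + wdeg s.
Proof. by rewrite /Defs.wdeg big_cons. Qed.
Lemma wdeg1 l : wdeg [:: l] = ldeg l.
Proof. by rewrite wdeg_cons wdeg_nil addr0. Qed.

Definition swL (a b : seq (letter I J)) : A :=
  \sum_(i < size a) \sum_(j < size b)
    match onth a i, onth b j with
    | Some (inl (inl iv)), Some (inl (inr jw)) =>
        sgn (wdeg (take i a) + wdeg b * wdeg (drop i.+1 a)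
             + (degV iv + 1) * wdeg (take j b))
        *: wr (take i a ++ take j b ++ inr (iv, jw) :: drop j.+1 b ++ drop i.+1 a)
    | _, _ => 0
    end.

Definition swR (a b : seq (letter I J)) : A :=
  \sum_(j < size b) \sum_(i < size a)
    match onth a i, onth b j with
    | Some (inl (inl iv)), Some (inl (inr jw)) =>
        sgn ((wdeg a + 1) * wdeg (take j b)
             + (wdeg (take i a) + degW jw * wdeg (drop i.+1 a)))
        *: wr (take j b ++ take i a ++ inr (iv, jw) :: drop i.+1 a ++ drop j.+1 b)
    | _, _ => 0
    end.

Lemma swL_nil b : swL [::] b = 0. Proof. by rewrite /swL big_ord0. Qed.
Lemma swR_nil a : swR a [::] = 0. Proof. by rewrite /swR big_ord0. Qed.

Lemma swL_cons l s t :
  swL (l :: s) t = sgn (wdeg t * wdeg s) *: (swL [:: l] t * wr s)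
                   + sgn (ldeg l) *: (wr [:: l] * swL s t).
Proof.
rewrite /swL big_ord_recl big_ord1; congr (_ + _).
  rewrite [_ * wr s]mulr_suml scaler_sumr; apply: eq_bigr => j _.
  case: l => [[iv|jw]|[iv jw]] /=; try by rewrite mul0r scaler0.
  case: (onth t j) => [[[iv'|jw']|[iv' jw']]|]; try by rewrite mul0r scaler0.
  rewrite scalerAl2 scalerA -sgnD drop0 cats0 wdeg_nil mulr0 !add0r.
  by rewrite -wr_cat -catA.
rewrite [wr [:: l] * _]mulr_sumr scaler_sumr; apply: eq_bigr => i _.
rewrite [wr [:: l] * _]mulr_sumr scaler_sumr; apply: eq_bigr => j _.
rewrite lift0 /=.
case: (onth s i) => [[[iv|jw]|[iv jw]]|]; try by rewrite mulr0 scaler0.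
case: (onth t j) => [[[iv'|jw']|[iv' jw']]|]; try by rewrite mulr0 scaler0.
by rewrite Ar scalerA -sgnD -wr_cat wdeg_cons /= !addrA.
Qed.

Lemma wr_cons l s : wr (l :: s) = wr [:: l] * wr s.
Proof. exact: (wr_cat [:: l] s). Qed.

Lemma swR_cons s l t :
  swR s (l :: t) = swR s [:: l] * wr t
                   + sgn ((wdeg s + 1) * ldeg l) *: (wr [:: l] * swR s t).
Proof.
rewrite /swR big_ord_recl big_ord1; congr (_ + _).
  rewrite [_ * wr t]mulr_suml; apply: eq_bigr => i _ /=.
  case: (onth s i) => [[[iv|jw]|[iv jw]]|]; try by rewrite mul0r.
  case: l => [[iv'|jw']|[iv' jw']]; try by rewrite mul0r.
  by rewrite drop0 cats0 scalerAl2 -wr_cat -catA.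
rewrite [wr [:: l] * _]mulr_sumr scaler_sumr; apply: eq_bigr => j _.
rewrite [wr [:: l] * _]mulr_sumr scaler_sumr; apply: eq_bigr => i _.
rewrite lift0 /=.
case: (onth s i) => [[[iv|jw]|[iv jw]]|]; try by rewrite mulr0 scaler0.
case: (onth t j) => [[[iv'|jw']|[iv' jw']]|]; try by rewrite mulr0 scaler0.
by rewrite Ar scalerA -sgnD -wr_cat wdeg_cons mulrDr -addrA.
Qed.

Lemma swL_cat s1 s2 t :
  swL (s1 ++ s2) t = sgn (wdeg t * wdeg s2) *: (swL s1 t * wr s2)
                     + sgn (wdeg s1) *: (wr s1 * swL s2 t).
Proof.
elim: s1 => [|l s1 IH].
  by rewrite swL_nil mul0r scaler0 add0r wdeg_nil sgn0 scale1r wr_nil mul1r.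
rewrite cat_cons (swL_cons l (s1 ++ s2) t) IH (swL_cons l s1 t) (wr_cons l s1).
rewrite wr_cat !wdeg_cat wdeg_cons.
mnorm Ar; snorm; modring.
Qed.

Lemma swR_cat s t1 t2 :
  swR s (t1 ++ t2) = swR s t1 * wr t2
                     + sgn ((wdeg s + 1) * wdeg t1) *: (wr t1 * swR s t2).
Proof.
elim: t1 => [|l t1 IH].
  by rewrite swR_nil mul0r add0r wdeg_nil mulr0 sgn0 scale1r wr_nil mul1r.
rewrite cat_cons (swR_cons s l (t1 ++ t2)) IH (swR_cons s l t1) (wr_cons l t1).
rewrite wr_cat wdeg_cons.
mnorm Ar; snorm; modring.
Qed.

Lemma swLR1 l t : swL [:: l] t = swR [:: l] t.
Proof.
rewrite /swL /swR big_ord1; apply: eq_bigr => j _; rewrite big_ord1 /=.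
case: l => [[iv|jw]|[iv jw]] //.
case: (onth t j) => [[[iv'|jw']|[iv' jw']]|] //.
rewrite wdeg_nil wdeg1 cats0; congr (sgn _ *: _); rewrite /=; ring.
Qed.

Lemma swLR2 s l : swL s [:: l] = swR s [:: l].
Proof.
rewrite /swL /swR big_ord1; apply: eq_bigr => i _; rewrite big_ord1 /=.
case: (onth s i) => [[[iv|jw]|[iv jw]]|] //.
case: l => [[iv'|jw']|[iv' jw']] //.
rewrite wdeg_nil wdeg1 cats0; congr (sgn _ *: _); rewrite /=; ring.
Qed.

End Words.


Section Steps.
Variables (K : fieldType) (A : lalgType K).
Hypothesis Ar : forall (c : K) (x y : A), x * (c *: y) = c *: (x * y).
Local Notation sgn := (sgn K).
Variables (D : A -> A) (hom : int -> A -> Prop) (sL sR : A -> A -> A).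
Hypothesis Dlin : forall (c : K) x y, D (c *: x + y) = c *: D x + D y.
Hypothesis DLeib : forall n x y, hom n x -> D (x * y) = D x * y + sgn n *: (x * D y).
Hypothesis Dhom : forall n x, hom n x -> hom (n + 1) (D x).

Lemma Dz : D 0 = 0.
Proof.
have := Dlin 1 0 0; rewrite scaler0 addr0 scale1r => /(congr1 (fun z => z - D 0)).
by rewrite subrr addrK => <-.
Qed.
Lemma DZ c x : D (c *: x) = c *: D x.
Proof. by rewrite -[c *: x]addr0 Dlin Dz addr0. Qed.
Lemma D1 : hom 0 1 -> D 1 = 0.
Proof.
move=> h; have := @DLeib 0 1 1 h; rewrite !mulr1 !mul1r sgn0 scale1r => /(congr1 (fun z => z - D 1)).
by rewrite subrr addrK => <-.
Qed.
Lemma DD x y : D (x + y) = D x + D y.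
Proof. by have := Dlin 1 x y; rewrite !scale1r. Qed.
Lemma DN x : D (- x) = - D x.
Proof. by rewrite -scaleN1r DZ scaleN1r. Qed.

Definition islinA (F : A -> A) := forall (c : K) x y, F (c *: x + y) = c *: F x + F y.
Lemma islin_mull y : islinA (fun x => x * y).
Proof. by move=> c u v; rewrite mulrDl scalerAl2. Qed.
Lemma islin_mulr y : islinA (fun x => y * x).
Proof. by move=> c u v; rewrite mulrDr Ar. Qed.
Lemma islin_comp (F G : A -> A) : islinA F -> islinA G -> islinA (fun x => F (G x)).
Proof. by move=> hF hG c u v; rewrite hG hF. Qed.
Lemma islin_add (F G : A -> A) : islinA F -> islinA G -> islinA (fun x => F x + G x).
Proof. move=> hF hG c u v; rewrite hF hG; modring. Qed.
Lemma islin_scale (F : A -> A) (a : K) : islinA F -> islinA (fun x => a *: F x).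
Proof. move=> hF c u v; rewrite hF; modring. Qed.
Lemma islin_sub (F G : A -> A) : islinA F -> islinA G -> islinA (fun x => F x - G x).
Proof. move=> hF hG c u v; rewrite hF hG; modring. Qed.
Lemma islin_id : islinA (fun x => x).
Proof. by []. Qed.

Section Part1.
Hypothesis sLlinl : forall b (c : K) x y, sL (c *: x + y) b = c *: sL x b + sL y b.
Hypothesis sLlinr : forall a (c : K) x y, sL a (c *: x + y) = c *: sL a x + sL a y.
Hypothesis sLhom : forall p q x b, hom p x -> hom q b -> hom (p + q - 1) (sL x b).
Hypothesis sLprod : forall p q r x y b, hom p x -> hom r y -> hom q b ->
  sL (x * y) b = sgn (q * r) *: (sL x b * y) + sgn p *: (x * sL y b).

Lemma sLl0 b : sL 0 b = 0.
Proof.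
have := sLlinl b 1 0 0; rewrite scaler0 addr0 scale1r => /(congr1 (fun z => z - sL 0 b)).
by rewrite subrr addrK => <-.
Qed.
Lemma sLlZ b c x : sL (c *: x) b = c *: sL x b.
Proof. by rewrite -[c *: x]addr0 sLlinl sLl0 addr0. Qed.
Lemma sLlD b x y : sL (x + y) b = sL x b + sL y b.
Proof. by have := sLlinl b 1 x y; rewrite !scale1r. Qed.

Variables (w : A) (q : int).
Hypothesis homw : hom q w.
Definition Id1 a p := D (sL a w) = a * w - sgn (p * q) *: (w * a)
      - sL (D a) w - sgn p *: sL a (D w).

Lemma Id1_one (h1 : hom 0 1) (hs1 : forall y, sL 1 y = 0) : Id1 1 0.
Proof. rewrite /Id1 (D1 h1) sLl0 !hs1 Dz mul0r sgn0; mnorm Ar; modring. Qed.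

Lemma step1 x y p r : hom p x -> hom r y -> Id1 x p -> Id1 y r -> Id1 (x * y) (p + r).
Proof.
move=> hx hy Hx Hy; rewrite /Id1.
rewrite (sLprod hx hy homw) DD !DZ.
rewrite (DLeib _ (sLhom hx homw)) (DLeib _ hx) Hx Hy.
rewrite (DLeib _ hx) sLlD sLlZ (sLprod (Dhom hx) hy homw) (sLprod hx (Dhom hy) homw).
rewrite (sLprod hx hy (Dhom homw)).
mnorm Ar. rewrite (mulrC r q). snorm.
have [->|->] := sgn_pm1 K p; have [->|->] := sgn_pm1 K q; have [->|->] := sgn_pm1 K r; modring.
Qed.
End Part1.

Section Part2.
Hypothesis sRlinl : forall b (c : K) x y, sR (c *: x + y) b = c *: sR x b + sR y b.
Hypothesis sRlinr : forall a (c : K) x y, sR a (c *: x + y) = c *: sR a x + sR a y.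
Hypothesis sRhom : forall p q x b, hom p x -> hom q b -> hom (p + q - 1) (sR x b).
Hypothesis sRprod : forall p r a y z, hom p a -> hom r y ->
  sR a (y * z) = sR a y * z + sgn ((p + 1) * r) *: (y * sR a z).

Lemma sRr0 a : sR a 0 = 0.
Proof.
have := sRlinr a 1 0 0; rewrite scaler0 addr0 scale1r => /(congr1 (fun z => z - sR a 0)).
by rewrite subrr addrK => <-.
Qed.
Lemma sRrZ a c x : sR a (c *: x) = c *: sR a x.
Proof. by rewrite -[c *: x]addr0 sRlinr sRr0 addr0. Qed.
Lemma sRrD a x y : sR a (x + y) = sR a x + sR a y.
Proof. by have := sRlinr a 1 x y; rewrite !scale1r. Qed.

Variables (v : A) (p : int).
Hypothesis homv : hom p v.
Definition Id2 b q := D (sR v b) = v * b - sgn (p * q) *: (b * v)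
      - sR (D v) b - sgn p *: sR v (D b).

Lemma Id2_one (h1 : hom 0 1) (hs1 : forall x, sR x 1 = 0) : Id2 1 0.
Proof. rewrite /Id2 (D1 h1) sRr0 !hs1 Dz mulr0 sgn0; mnorm Ar; modring. Qed.

Lemma step2 y z r s : hom r y -> hom s z -> Id2 y r -> Id2 z s -> Id2 (y * z) (r + s).
Proof.
move=> hy hz Hy Hz; rewrite /Id2.
rewrite (sRprod _ homv hy) DD DZ.
rewrite (DLeib _ (sRhom homv hy)) (DLeib _ hy) Hy Hz.
rewrite (sRprod _ (Dhom homv) hy) (DLeib _ hy) sRrD sRrZ (sRprod _ homv (Dhom hy)) (sRprod _ homv hy).
mnorm Ar. snorm.
have [->|->] := sgn_pm1 K p; have [->|->] := sgn_pm1 K r; modring.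
Qed.
End Part2.

End Steps.


Section Basics.
Variables (K : fieldType) (I J : choiceType) (degV : I -> int) (degW : J -> int).
Local Notation T := (tens K I J).
Local Notation wrd := (@wrd K I J).
Local Notation wdeg := (wdeg degV degW).
Local Notation ldeg := (ldeg degV degW).
Local Notation sgn := (sgn K).

Lemma wrd_cat s t : wrd (s ++ t) = wrd s * wrd t.
Proof.
rewrite /Defs.wrd malgM_def fgmulUU mulr1; congr (<< _ >>).
by apply: val_inj; rewrite /= fmM.
Qed.
Lemma wrd_nil : wrd [::] = 1.
Proof. by rewrite /Defs.wrd; congr (<< _ >>); apply: val_inj; rewrite /= fm1. Qed.
Lemma wrd_cons l s : wrd (l :: s) = wrd [:: l] * wrd s.
Proof. by rewrite -wrd_cat. Qed.

Lemma malgC_comm (c : K) (x : T) : x * c%:MP = c%:MP * x.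
Proof.
rewrite mul_malgC malgM_def fgmulgU malgZ_def /fgscale.
by apply: eq_bigr => k _; rewrite mulrC mulm1.
Qed.
Lemma scalerAr' (c : K) (x y : T) : x * (c *: y) = c *: (x * y).
Proof. by rewrite -mul_malgC mulrA malgC_comm -mulrA mul_malgC. Qed.
Lemma scalerAl' (c : K) (x y : T) : (c *: x) * y = c *: (x * y).
Proof. by rewrite scalerAl. Qed.

Lemma monalgU_Z (c : K) (k : {fmonom letter I J}) : << c *g k >> = c *: (<< k >> : T).
Proof. by apply/malgP => k'; rewrite mcoeffZ mcoeffU mcoeffU mulr_natr. Qed.

Lemma malg_decomp (x : T) : x = \sum_(m <- msupp x) x@_m *: wrd m.
Proof.
rewrite {1}[x]monalgE; apply: eq_bigr => m _.
by rewrite monalgU_Z /Defs.wrd fmK.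
Qed.

Lemma wrd_coef s (m : {fmonom letter I J}) : (wrd s)@_m = (FMonom s == m)%:R.
Proof. by rewrite /Defs.wrd mcoeffU. Qed.

Lemma homog_wrd s : homog degV degW (wdeg s) (wrd s).
Proof.
move=> m hm; rewrite wrd_coef; case: eqP => // e; move: hm; by rewrite -e eqxx.
Qed.

Definition islin (F : T -> T) := forall (c : K) x y, F (c *: x + y) = c *: F x + F y.

Lemma islin0 F : islin F -> F 0 = 0.
Proof.
move=> H; have := H 1 0 0; rewrite [1 *: 0]scaler0 [0 + 0]addr0 [1 *: F 0]scale1r => /(congr1 (fun z => z - F 0)).
by rewrite subrr addrK => <-.
Qed.
Lemma islinZ F c x : islin F -> F (c *: x) = c *: F x.
Proof. by move=> H; rewrite -[c *: x]addr0 H (islin0 H) addr0. Qed.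
Lemma islinD F x y : islin F -> F (x + y) = F x + F y.
Proof. by move=> H; have := H 1 x y; rewrite (@scale1r K T) (@scale1r K T). Qed.
Lemma islinN F x : islin F -> F (- x) = - F x.
Proof. by move=> H; rewrite -scaleN1r islinZ // scaleN1r. Qed.
Lemma islinB F x y : islin F -> F (x - y) = F x - F y.
Proof. by move=> H; rewrite islinD // islinN. Qed.

Lemma islin_sum F (X : Type) (r : seq X) (c : X -> K) (f : X -> T) :
  islin F -> F (\sum_(i <- r) c i *: f i) = \sum_(i <- r) c i *: F (f i).
Proof.
move=> H; elim: r => [|a r IH]; first by rewrite big_nil big_nil (islin0 H).
by rewrite big_cons [in RHS]big_cons H IH.
Qed.

Lemma lin_ext F G (P : seq (letter I J) -> bool) (x : T) :
  islin F -> islin G -> (forall s, P s -> F (wrd s) = G (wrd s)) ->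
  (forall m : {fmonom letter I J}, ~~ P m -> x@_m = 0) -> F x = G x.
Proof.
move=> hF hG hP hx; rewrite [x]malg_decomp (islin_sum _ _ _ hF) (islin_sum _ _ _ hG).
apply: eq_big_seq => m hm; case: (boolP (P m)) => [/hP -> //|/hx].
move=> xm; move: hm; rewrite -mcoeff_neq0 xm eqxx => /negP hh; exfalso; exact: (hh isT).
Qed.

Definition lin (f : seq (letter I J) -> T) (x : T) : T :=
  \sum_(m <- msupp x) x@_m *: f m.

Lemma lin_w f (d : {fset {fmonom letter I J}}) x : fsubset (msupp x) d ->
  lin f x = \sum_(m <- d) x@_m *: f m.
Proof.
move=> le; rewrite /lin (big_fset_incl _ le) //= => m _ /mcoeff_outdom ->.
by rewrite scale0r.
Qed.

Lemma lin_islin f : islin (lin f).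
Proof.
move=> c x y; set d := fsetU (msupp x) (msupp y).
rewrite (@lin_w f d) ?(@lin_w f d x) ?(@lin_w f d y) ?fsubsetUl ?fsubsetUr //.
  rewrite scaler_sumr -big_split /=; apply: eq_bigr => m _.
  by rewrite mcoeffD mcoeffZ scalerDl scalerA.
apply: fsubset_trans (msuppD_le _ _) _; apply: fsetSU; exact: msuppZ_le.
Qed.

Lemma lin_wrd f s : lin f (wrd s) = f s.
Proof.
rewrite /lin /Defs.wrd msuppU1 big_seq_fset1 mcoeffUU scale1r //.
Qed.

Lemma lin_fun (f g : seq (letter I J) -> T) c x :
  lin (fun m => c *: f m + g m) x = c *: lin f x + lin g x.
Proof.
rewrite /lin scaler_sumr -big_split /=; apply: eq_bigr => m _.
by rewrite scalerDr !scalerA mulrC.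
Qed.

Lemma lin_ext_eq (f g : seq (letter I J) -> T) x : f =1 g -> lin f x = lin g x.
Proof. by move=> e; apply: eq_bigr => m _; rewrite e. Qed.

Lemma lin_zero x : lin (fun _ => 0) x = 0.
Proof. by rewrite /lin big1 // => m _; rewrite scaler0. Qed.

End Basics.


Section Conc.
Variables (K : fieldType) (I J : choiceType) (degV : I -> int) (degW : J -> int).
Local Notation T := (tens K I J).
Local Notation wrd := (@wrd K I J).
Local Notation wdeg := (wdeg degV degW).
Local Notation ldeg := (ldeg degV degW).
Local Notation sgn := (sgn K).
Local Notation sL := (sharpL degV degW).
Local Notation sR := (sharpR degV degW).
Local Notation hom := (homog degV degW).

Lemma sharpwLE a b : sharpwL K degV degW a b = swL degV degW wrd a b.
Proof. reflexivity. Qed.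
Lemma sharpwRE a b : sharpwR K degV degW a b = swR degV degW wrd a b.
Proof. reflexivity. Qed.

Lemma sL_lin x y : sL x y = lin (fun m1 => lin (sharpwL K degV degW m1) y) x.
Proof.
rewrite /sharpL /lin; apply: eq_bigr => m1 _.
rewrite scaler_sumr; apply: eq_bigr => m2 _; by rewrite scalerA.
Qed.
Lemma sR_lin x y : sR x y = lin (fun m1 => lin (sharpwR K degV degW m1) y) x.
Proof.
rewrite /sharpR /lin; apply: eq_bigr => m1 _.
rewrite scaler_sumr; apply: eq_bigr => m2 _; by rewrite scalerA.
Qed.

Lemma sLlinl b (c : K) x y : sL (c *: x + y) b = c *: sL x b + sL y b.
Proof. by rewrite !sL_lin lin_islin. Qed.
Lemma sRlinl b (c : K) x y : sR (c *: x + y) b = c *: sR x b + sR y b.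
Proof. by rewrite !sR_lin lin_islin. Qed.
Lemma sLlinr a (c : K) x y : sL a (c *: x + y) = c *: sL a x + sL a y.
Proof.
rewrite !sL_lin -lin_fun; apply: lin_ext_eq => m; exact: lin_islin.
Qed.
Lemma sRlinr a (c : K) x y : sR a (c *: x + y) = c *: sR a x + sR a y.
Proof.
rewrite !sR_lin -lin_fun; apply: lin_ext_eq => m; exact: lin_islin.
Qed.

Lemma sL_wrd s t : sL (wrd s) (wrd t) = sharpwL K degV degW s t.
Proof. by rewrite sL_lin lin_wrd lin_wrd. Qed.
Lemma sR_wrd s t : sR (wrd s) (wrd t) = sharpwR K degV degW s t.
Proof. by rewrite sR_lin lin_wrd lin_wrd. Qed.

Lemma homog0 n : hom n (0 : T).
Proof. by move=> m _; rewrite mcoeff0. Qed.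
Lemma homogD n (x y : T) : hom n x -> hom n y -> hom n (x + y).
Proof. by move=> hx hy m hm; rewrite mcoeffD (hx m hm) (hy m hm) addr0. Qed.
Lemma homogZ n (c : K) (x : T) : hom n x -> hom n (c *: x).
Proof. by move=> hx m hm; rewrite mcoeffZ (hx m hm) mulr0. Qed.
Lemma homog_eq n n' (x : T) : n = n' -> hom n x -> hom n' x.
Proof. by move=> ->. Qed.
Lemma homog_wrd_eq n s : wdeg s = n -> hom n (wrd s).
Proof. by move=> <-; exact: homog_wrd. Qed.
Lemma homog_sum n (X : Type) (r : seq X) (P : pred X) (F : X -> T) :
  (forall i, P i -> hom n (F i)) -> hom n (\sum_(i <- r | P i) F i).
Proof.
move=> H; apply: (big_ind (hom n)); [exact: homog0|exact: homogD|exact: H].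
Qed.
Lemma homog_supp p (x : T) m : hom p x -> m \in msupp x -> wdeg m = p.
Proof.
move=> hx; rewrite -mcoeff_neq0; apply: contraNeq => hm.
by rewrite (hx m hm).
Qed.
Lemma homog_lin n (f : seq (letter I J) -> T) (x : T) : (forall m : {fmonom letter I J}, m \in msupp x -> hom n (f m)) ->
  hom n (lin f x).
Proof.
move=> H; rewrite /lin big_seq; apply: homog_sum => m hm; apply: homogZ; exact: H.
Qed.

Lemma onth_split (s : seq (letter I J)) i x : onth s i = Some x -> s = take i s ++ x :: drop i.+1 s.
Proof.
move=> e; have hi : (i < size s)%N by rewrite -onthTE e.
by rewrite -{1}(cat_take_drop i s) (drop_nth x hi) (@onth_nth _ x x s i e).
Qed.

Lemma onth_wdeg (s : seq (letter I J)) i x : onth s i = Some x ->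
  wdeg s = wdeg (take i s) + ldeg x + wdeg (drop i.+1 s).
Proof. by move=> e; rewrite {1}(onth_split e) wdeg_cat wdeg_cons addrA. Qed.

Lemma homog_swL a b : hom (wdeg a + wdeg b - 1) (sharpwL K degV degW a b).
Proof.
rewrite sharpwLE /swL; apply: homog_sum => i _; apply: homog_sum => j _.
case ea: (onth a i) => [[[iv|jw]|[iv jw]]|]; try exact: homog0.
case eb: (onth b j) => [[[iv'|jw']|[iv' jw']]|]; try exact: homog0.
apply: homogZ; apply: homog_wrd_eq; rewrite !wdeg_cat !wdeg_cons.
rewrite (onth_wdeg ea) (onth_wdeg eb) wdeg_cat /=; ring.
Qed.

Lemma homog_swR a b : hom (wdeg a + wdeg b - 1) (sharpwR K degV degW a b).
Proof.
rewrite sharpwRE /swR; apply: homog_sum => j _; apply: homog_sum => i _.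
case ea: (onth a i) => [[[iv|jw]|[iv jw]]|]; try exact: homog0.
case eb: (onth b j) => [[[iv'|jw']|[iv' jw']]|]; try exact: homog0.
apply: homogZ; apply: homog_wrd_eq; rewrite !wdeg_cat !wdeg_cons.
rewrite (onth_wdeg ea) (onth_wdeg eb) wdeg_cat /=; ring.
Qed.

Lemma homog_sL p q (x b : T) : hom p x -> hom q b -> hom (p + q - 1) (sL x b).
Proof.
move=> hx hb; rewrite sL_lin; apply: homog_lin => m1 h1; apply: homog_lin => m2 h2.
rewrite -(homog_supp hx h1) -(homog_supp hb h2); exact: homog_swL.
Qed.
Lemma homog_sR p q (x b : T) : hom p x -> hom q b -> hom (p + q - 1) (sR x b).
Proof.
move=> hx hb; rewrite sR_lin; apply: homog_lin => m1 h1; apply: homog_lin => m2 h2.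
rewrite -(homog_supp hx h1) -(homog_supp hb h2); exact: homog_swR.
Qed.

Local Notation Ar := (@scalerAr' K I J).

Lemma sLprod p q r (x y b : T) : hom p x -> hom r y -> hom q b ->
  sL (x * y) b = sgn (q * r) *: (sL x b * y) + sgn p *: (x * sL y b).
Proof.
move=> hx hy hb.
apply: (lin_ext (F := fun x => sL (x * y) b)
   (G := fun x => sgn (q * r) *: (sL x b * y) + sgn p *: (x * sL y b))
   (P := fun s => wdeg s == p)).
- exact: (islin_comp (sLlinl b) (islin_mull y)).
- exact: (islin_add (islin_scale _ (islin_comp (islin_mull y) (sLlinl b))) (islin_scale _ (islin_mull (sL y b)))).
- move=> s /eqP <-.
  apply: (lin_ext (F := fun y => sL (wrd s * y) b)
     (G := fun y => sgn (q * r) *: (sL (wrd s) b * y) + sgn (wdeg s) *: (wrd s * sL y b))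
     (P := fun s => wdeg s == r)).
  + exact: (islin_comp (sLlinl b) (islin_mulr Ar (wrd s))).
  + exact: (islin_add (islin_scale _ (islin_mulr Ar _)) (islin_scale _ (islin_comp (islin_mulr Ar (wrd s)) (sLlinl b)))).
  + move=> s' /eqP <-.
    apply: (lin_ext (F := fun b => sL (wrd s * wrd s') b)
       (G := fun b => sgn (q * wdeg s') *: (sL (wrd s) b * wrd s') + sgn (wdeg s) *: (wrd s * sL (wrd s') b))
       (P := fun s => wdeg s == q)).
    * exact: (sLlinr (wrd s * wrd s')).
    * exact: (islin_add (islin_scale _ (islin_comp (islin_mull (wrd s')) (sLlinr (wrd s)))) (islin_scale _ (islin_comp (islin_mulr Ar (wrd s)) (sLlinr (wrd s'))))).
    * move=> t /eqP <-.
      rewrite -wrd_cat !sL_wrd !sharpwLE.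
      exact: (swL_cat degV degW (@wrd_cat K I J) (wrd_nil K I J) Ar).
    * exact: hb.
  + exact: hy.
- exact: hx.
Qed.

Lemma sRprod p r (a y z : T) : hom p a -> hom r y ->
  sR a (y * z) = sR a y * z + sgn ((p + 1) * r) *: (y * sR a z).
Proof.
move=> ha hy.
apply: (lin_ext (F := fun a => sR a (y * z))
   (G := fun a => sR a y * z + sgn ((p + 1) * r) *: (y * sR a z))
   (P := fun s => wdeg s == p)).
- exact: (sRlinl (y * z)).
- exact: (islin_add (islin_comp (islin_mull z) (sRlinl y)) (islin_scale _ (islin_comp (islin_mulr Ar y) (sRlinl z)))).
- move=> s /eqP <-.
  apply: (lin_ext (F := fun y => sR (wrd s) (y * z))
     (G := fun y => sR (wrd s) y * z + sgn ((wdeg s + 1) * r) *: (y * sR (wrd s) z))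
     (P := fun s => wdeg s == r)).
  + exact: (islin_comp (sRlinr (wrd s)) (islin_mull z)).
  + exact: (islin_add (islin_comp (islin_mull z) (sRlinr (wrd s))) (islin_scale _ (islin_mull (sR (wrd s) z)))).
  + move=> s' /eqP <-.
    apply: (lin_ext (F := fun z => sR (wrd s) (wrd s' * z))
       (G := fun z => sR (wrd s) (wrd s') * z + sgn ((wdeg s + 1) * wdeg s') *: (wrd s' * sR (wrd s) z))
       (P := fun _ => true)).
    * exact: (islin_comp (sRlinr (wrd s)) (islin_mulr Ar (wrd s'))).
    * exact: (islin_add (islin_mulr Ar _) (islin_scale _ (islin_comp (islin_mulr Ar (wrd s')) (sRlinr (wrd s))))).
    * move=> t _.
      rewrite -wrd_cat !sR_wrd !sharpwRE.
      exact: (swR_cat degV degW (@wrd_cat K I J) (wrd_nil K I J) Ar).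
    * move=> m hm; discriminate hm.
  + exact: hy.
- exact: ha.
Qed.

Lemma sLR_wrd1 l (y : T) : sL (wrd [:: l]) y = sR (wrd [:: l]) y.
Proof.
rewrite sL_lin sR_lin !lin_wrd; apply: lin_ext_eq => m.
rewrite sharpwLE sharpwRE; exact: swLR1.
Qed.
Lemma sLR_x_wrd1 l (x : T) : sL x (wrd [:: l]) = sR x (wrd [:: l]).
Proof.
rewrite sL_lin sR_lin; apply: lin_ext_eq => m.
rewrite !lin_wrd sharpwLE sharpwRE; exact: swLR2.
Qed.
Lemma sL_nil (y : T) : sL (wrd [::]) y = 0.
Proof.
rewrite sL_lin lin_wrd -[RHS](lin_zero y); apply: lin_ext_eq => m.
by rewrite sharpwLE swL_nil.
Qed.
Lemma sR_nil (x : T) : sR x (wrd [::]) = 0.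
Proof.
rewrite sR_lin -[RHS](lin_zero x); apply: lin_ext_eq => m.
by rewrite lin_wrd sharpwRE swR_nil.
Qed.

End Conc.


Unset Implicit Arguments.
Set Strict Implicit.
Set Printing Implicit Defensive.

Section M.
Variables (K : fieldType) (I J : choiceType) (degV : I -> int) (degW : J -> int).
Variable (D0 : tens K I J -> tens K I J).
Hypothesis Hvw : (forall (p q : int) (v w : tens K I J),
      inV v -> homog degV degW p v -> inW w -> homog degV degW q w ->
      D0 (sharpR degV degW v w) =
        v * w - sgn K (p * q) *: (w * v)
        - sharpL degV degW (D0 v) w - sgn K p *: sharpR degV degW v (D0 w)).

Lemma inV_wrd1 i : inV (wrd K [:: inl (inl i) : letter I J]).
Proof.
move=> m hm. rewrite wrd_coef. case: eqP => e; last first. exact: erefl.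
move: hm; rewrite -e /=. done.
Qed.

Lemma base1 l w q : isVl l -> inW w -> homog degV degW q w ->
  Id1 D0 (sharpL degV degW) w q (wrd K [:: l]) (wdeg degV degW [:: l]).
Proof.
case: l => [[i|j]|[i j]] // _ hw hqw.
rewrite /Id1 (sLR_wrd1 _ _ _ w) (sLR_wrd1 _ _ _ (D0 w)).
have := Hvw _ _ _ _ (inV_wrd1 i) (@homog_wrd K I J degV degW [:: inl (inl i)]) hw hqw.
move=> ->.
done.
Qed.
Lemma inW_wrd1 j : inW (wrd K [:: inl (inr j) : letter I J]).
Proof.
move=> m hm; rewrite wrd_coef; case: eqP => e; last first; first exact: erefl.
by move: hm; rewrite -e /=.
Qed.

Lemma base2 l v p : isWl l -> inV v -> homog degV degW p v ->
  Id2 D0 (sharpR degV degW) v p (wrd K [:: l]) (wdeg degV degW [:: l]).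
Proof.
case: l => [[i|j]|[i j]] // _ hv hpv.
rewrite /Id2 -(sLR_x_wrd1 _ _ _ (D0 v)).
by have := Hvw _ _ _ _ hv hpv (inW_wrd1 j) (@homog_wrd K I J degV degW [:: inl (inr j)]) => ->.
Qed.

Hypothesis Dlin : forall (c : K) (x y : tens K I J), D0 (c *: x + y) = c *: D0 x + D0 y.
Hypothesis DLeib : forall (n : int) (x y : tens K I J),
  homog degV degW n x -> D0 (x * y) = D0 x * y + sgn K n *: (x * D0 y).
Hypothesis Dhom : forall (n : int) (x : tens K I J),
  homog degV degW n x -> homog degV degW (n + 1) (D0 x).

Lemma h01 : homog degV degW 0 (1 : tens K I J).
Proof. by rewrite -(wrd_nil K I J) -(wdeg_nil degV degW); exact: homog_wrd. Qed.

Lemma word1 w q s : inW w -> homog degV degW q w -> all (@isVl I J) s ->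
  Id1 D0 (sharpL degV degW) w q (wrd K s) (wdeg degV degW s).
Proof.
move=> hw hqw; elim: s => [_|l s IH /andP [hl hs]].
  rewrite wrd_nil wdeg_nil.
  apply: (Id1_one Dlin DLeib (@sLlinl K I J degV degW) w q h01) => y.
  by rewrite -(wrd_nil K I J) sL_nil.
rewrite (wrd_cons K l s).
have -> : wdeg degV degW (l :: s) = wdeg degV degW [:: l] + wdeg degV degW s.
  by rewrite -wdeg_cat.
have S1 := @step1 K _ (@scalerAr' K I J) D0 (homog degV degW) (sharpL degV degW) Dlin
   DLeib Dhom (@sLlinl K I J degV degW) (@homog_sL K I J degV degW) (@sLprod K I J degV degW)
   w q hqw _ _ _ _ (@homog_wrd K I J degV degW [:: l]) (@homog_wrd K I J degV degW s)
   (@base1 l w q hl hw hqw) (IH hs).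
exact: S1.
Qed.

Lemma word2 v p s : inV v -> homog degV degW p v -> all (@isWl I J) s ->
  Id2 D0 (sharpR degV degW) v p (wrd K s) (wdeg degV degW s).
Proof.
move=> hv hpv; elim: s => [_|l s IH /andP [hl hs]].
  rewrite wrd_nil wdeg_nil.
  apply: (Id2_one Dlin DLeib (@sRlinr K I J degV degW) v p h01) => x.
  by rewrite -(wrd_nil K I J) sR_nil.
rewrite (wrd_cons K l s).
have -> : wdeg degV degW (l :: s) = wdeg degV degW [:: l] + wdeg degV degW s.
  by rewrite -wdeg_cat.
have S1 := @step2 K _ (@scalerAr' K I J) D0 (homog degV degW) (sharpR degV degW) Dlin
   DLeib Dhom (@sRlinr K I J degV degW) (@homog_sR K I J degV degW) (@sRprod K I J degV degW)
   v p hpv _ _ _ _ (@homog_wrd K I J degV degW [:: l]) (@homog_wrd K I J degV degW s)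
   (@base2 l v p hl hv hpv) (IH hs).
exact: S1.
Qed.

End M.

Theorem lemma6p7 (K : fieldType) (I J : choiceType)
    (degV : I -> int) (degW : J -> int)
    (dV dW D0 : tens K I J -> tens K I J) :
  is_deriv1_on degV degW (@inTV K I J) dV ->
  is_deriv1_on degV degW (@inTW K I J) dW ->
  is_deriv1 degV degW D0 ->
  (forall v, inV v -> D0 v = dV v) ->
  (forall w, inW w -> D0 w = dW w) ->
  (forall (p q : int) (v w : tens K I J),
      inV v -> homog degV degW p v -> inW w -> homog degV degW q w ->
      D0 (sharpR degV degW v w) =
        v * w - sgn K (p * q) *: (w * v)
        - sharpL degV degW (D0 v) w - sgn K p *: sharpR degV degW v (D0 w)) ->
  (forall (p q : int) (a w : tens K I J),
    inTV a -> homog degV degW p a -> inW w -> homog degV degW q w ->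
    D0 (sharpL degV degW a w) =
      a * w - sgn K (p * q) *: (w * a)
      - sharpL degV degW (D0 a) w - sgn K p *: sharpL degV degW a (D0 w))
  /\
  (forall (p q : int) (v b : tens K I J),
    inV v -> homog degV degW p v -> inTW b -> homog degV degW q b ->
    D0 (sharpR degV degW v b) =
      v * b - sgn K (p * q) *: (b * v)
      - sharpR degV degW (D0 v) b - sgn K p *: sharpR degV degW v (D0 b)).
Proof.
move=> _ _ [Dlin DLeib Dhom] _ _ Hvw.
have Ar := @scalerAr' K I J.
split.
- move=> p q a w ha hpa hw hqw.
  apply: (lin_ext (F := fun a => D0 (sharpL degV degW a w))
    (G := fun a => a * w - sgn K (p * q) *: (w * a)
      - sharpL degV degW (D0 a) w - sgn K p *: sharpL degV degW a (D0 w))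
    (P := fun s => (wdeg degV degW s == p) && all (@isVl I J) s)).
  + exact: (islin_comp Dlin (@sLlinl K I J degV degW w)).
  + exact: (islin_sub (islin_sub (islin_sub (islin_mull w) (islin_scale _ (islin_mulr Ar w)))
          (islin_comp (@sLlinl K I J degV degW w) Dlin)) (islin_scale _ (@sLlinl K I J degV degW (D0 w)))).
  + move=> s /andP [/eqP <- hs].
    have W1 := @word1 K I J degV degW D0 Hvw Dlin DLeib Dhom w q s hw hqw hs; rewrite /Id1 in W1.
    rewrite /= W1. reflexivity.
  + move=> m; rewrite negb_and => /orP [h|h]; [exact: hpa | exact: ha].
- move=> p q v b hv hpv hb hqb.
  apply: (lin_ext (F := fun b => D0 (sharpR degV degW v b))
    (G := fun b => v * b - sgn K (p * q) *: (b * v)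
      - sharpR degV degW (D0 v) b - sgn K p *: sharpR degV degW v (D0 b))
    (P := fun s => (wdeg degV degW s == q) && all (@isWl I J) s)).
  + exact: (islin_comp Dlin (@sRlinr K I J degV degW v)).
  + exact: (islin_sub (islin_sub (islin_sub (islin_mulr Ar v) (islin_scale _ (islin_mull v)))
          (@sRlinr K I J degV degW (D0 v))) (islin_scale _ (islin_comp (@sRlinr K I J degV degW v) Dlin))).
  + move=> s /andP [/eqP <- hs].
    have W1 := @word2 K I J degV degW D0 Hvw Dlin DLeib Dhom v p s hv hpv hs; rewrite /Id2 in W1.
    rewrite /= W1. reflexivity.
  + move=> m; rewrite negb_and => /orP [h|h]; [exact: hqb | exact: hb].
Qed.
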